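(* Let $p$ be an odd prime and $P$ a finite $p$-group of class $2$ and exponent $p$. (i) There are subgroups $Q$ and $A$ of $P$ such that $Z(Q)=Q'=P'$, $A\le Z(P)$ and $P=Q\times A$. (ii) Let $Q,R\le P$ satisfy $Z(Q)=Q'=P'=R'=Z(R)$ and $P=QZ(P)=RZ(P)$. If $A\le Z(P)$ is such that $P=Q\times A$, then also $P=R\times A$. Furthermore, there is an upper central automorphism of $P$ sending $Q$ to $R$ and acting as the identity on $Z(P)$.
   Context: An automorphism $\varphi$ of $P$ is upper central if $Z(P)x\varphi=Z(P)x$ for all $x\in P$. $P'$ denotes the commutator subgroup and $Z(\cdot)$ the center. *)

(* Defs.v *)
From mathcomp Require Import all_boot all_fingroup all_solvable.
Set Implicit Arguments. Unset Strict Implicit. Unset Printing Implicit Defensive.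
Local Open Scope group_scope.

Definition upper_central (gT : finGroupType) (P : {set gT}) (phi : {perm gT}) :=
  forall x, x \in P -> 'Z(P) :* phi x = 'Z(P) :* x.

(* Main.v *)
Require Import Defs.
From mathcomp Require Import all_boot all_fingroup all_solvable.
Set Implicit Arguments. Unset Strict Implicit. Unset Printing Implicit Defensive.
Local Open Scope group_scope.

Lemma part1 (gT : finGroupType) (p : nat) (P : {group gT}) :
  prime p -> P^`(1) \subset 'Z(P) -> exponent P %| p ->
  exists (Q A : {group gT}),
      [/\ Q \subset P, 'Z(Q) = Q^`(1), Q^`(1) = P^`(1),
          A \subset 'Z(P) & Q \x A = P].
Proof.
move=> pr_p sP'Z eP.
have abZ : p.-abelem 'Z(P).
  by rewrite abelemE // center_abelian (dvdn_trans (exponentS (center_sub P))).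
have [A /complP [tiDA defDA]] := splitsP (abelem_splits abZ sP'Z).
have sAZ : A \subset 'Z(P) by rewrite -defDA mulG_subr.
have sAP : A \subset P := subset_trans sAZ (center_sub P).
have cAP : A \subset 'C(P) := subset_trans sAZ (subsetIr _ _).
have nDP : P^`(1) <| P := der_normal 1 P.
have nDP' : P \subset 'N(P^`(1)) := normal_norm nDP.
have abP : p.-abelem (P / P^`(1)).
  rewrite abelemE // sub_der1_abelian //=.
  exact: dvdn_trans (exponent_quotient _ _) eP.
have sAbP : A / P^`(1) \subset P / P^`(1) by apply: quotientS.
have [Qb /complP [tiAQ defAQ]] := splitsP (abelem_splits abP sAbP).
pose Q := (coset P^`(1) @*^-1 Qb)%G.
have sQbP : Qb \subset P / P^`(1) by rewrite -defAQ mulG_subr.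
have sQP : Q \subset P.
  by apply: subset_trans (morphpreS _ sQbP) _; rewrite quotientGK.
have sDQ : P^`(1) \subset Q by rewrite -{1}(ker_coset P^`(1)) ker_sub_pre.
have cQA : Q \subset 'C(A) by apply: subset_trans sQP _; rewrite centsC.
have tiQA : Q :&: A = 1.
  apply/trivgP/subsetP => x /setIP[Qx Ax].
  have Nx : x \in 'N(P^`(1)) := subsetP nDP' x (subsetP sAP x Ax).
  have : coset P^`(1) x \in A / P^`(1) :&: Qb.
    rewrite inE mem_quotient //=.
    by move/morphpreP: Qx => [].
  rewrite tiAQ => /set1P c1; have xD := coset_idr Nx c1.
  have : x \in P^`(1) :&: A by rewrite inE xD Ax.
  by rewrite tiDA.
have dAQ : A \x Q = A * Q by rewrite dprodE // setIC.
have defP : A * Q = P.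
  apply/eqP; rewrite eqEsubset mulG_subG sAP sQP /=; apply/subsetP => x Px.
  have : coset P^`(1) x \in A / P^`(1) * Qb by rewrite defAQ mem_quotient.
  case/mulsgP => ca cq /morphimP[a Na Aa ->] Qcq def.
  have Nx := subsetP nDP' x Px.
  rewrite -(mulKVg a x) mem_mulg //.
  apply: mem_morphpre; first by rewrite groupM ?groupV.
  rewrite morphM ?groupV // morphV //.
  by have -> : coset_morphism P^`(1) x = coset P^`(1) x by []; rewrite def mulKg.
have dQA : Q \x A = P by rewrite dprodC dAQ defP.
have abA : abelian A := abelianS sAZ (center_abelian P).
have A'1 : A^`(1) = 1 by apply/derG1P.
have QD : Q^`(1) = P^`(1).
  by have := der_dprod 1 dQA; rewrite A'1 dprodg1.
exists Q, A; split => //.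
have := center_dprod dQA; rewrite (center_idP abA) => dZ.
have [_ defZ _ tiZ] := dprodP dZ.
have c1 := TI_cardMg tiZ; have c2 := TI_cardMg tiDA.
rewrite defZ in c1; rewrite defDA c1 in c2.
have cQ : #|'Z(Q)| = #|P^`(1)|.
  by apply/eqP; rewrite -(eqn_pmul2r (cardG_gt0 A)) c2.
apply/esym/eqP; rewrite eqEcard cQ QD leqnn andbT subsetI -{1}QD der_sub /=.
apply: subset_trans sP'Z _.
exact: subset_trans (subsetIr _ _) (centS sQP).
Qed.
Lemma swap4 (gT : finGroupType) (a b c e : gT) :
  commute c b -> a * b * (c * e) = a * c * (b * e).
Proof. by move=> cb; rewrite -!mulgA (mulgA b) -cb !mulgA. Qed.

Lemma part2 (gT : finGroupType) (P Q R A : {group gT}) :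
      P^`(1) \subset 'Z(P) ->
      Q \subset P -> R \subset P ->
      'Z(Q) = Q^`(1) -> Q^`(1) = P^`(1) -> P^`(1) = R^`(1) -> R^`(1) = 'Z(R) ->
      Q * 'Z(P) = P -> R * 'Z(P) = P ->
      A \subset 'Z(P) -> Q \x A = P ->
      R \x A = P /\
      exists2 phi : {perm gT}, phi \in Aut P &
        [/\ upper_central P phi, phi @: Q = R &
            forall z, z \in 'Z(P) -> phi z = z].
Proof.
move=> sP'Z sQP sRP ZQ QP PR RZ QZP RZP sAZ dQA.
have [_ defQA cQA tiQA] := dprodP dQA.
have cAP : A \subset 'C(P) := subset_trans sAZ (subsetIr _ _).
have cAR : A \subset 'C(R) := subset_trans cAP (centS sRP).
have sAP : A \subset P := subset_trans sAZ (subsetIl _ _).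
have IZ (X : {group gT}) : X \subset P -> 'Z(X) = P^`(1) -> X :&: 'Z(P) = P^`(1).
  move=> sXP ZX; apply/eqP; rewrite eqEsubset; apply/andP; split.
    rewrite -ZX subsetI subsetIl /=.
    exact: subset_trans (subsetIr _ _) (subset_trans (subsetIr _ _) (centS sXP)).
  by rewrite subsetI sP'Z andbT -ZX subsetIl.
have IQ := IZ Q sQP (etrans ZQ QP).
have IR := IZ R sRP (esym (etrans PR RZ)).
have sP'Q : P^`(1) \subset Q by rewrite -IQ subsetIl.
have sP'R : P^`(1) \subset R by rewrite -IR subsetIl.
have cardQR : #|Q| = #|R|.
  have := mul_cardG Q 'Z(P); have := mul_cardG R 'Z(P).
  rewrite QZP RZP IQ IR => <- /eqP.
  by rewrite eqn_pmul2r ?cardG_gt0 // => /eqP.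
have tiRA : R :&: A = 1.
  apply/trivgP; rewrite -tiQA subsetI subsetIr andbT.
  apply: subset_trans sP'Q; rewrite -IR setIS //.
have dRA : R \x A = P.
  rewrite dprodE //; apply/eqP; rewrite eqEcard mulG_subG sRP sAP /=.
  by rewrite TI_cardMg // -cardQR -TI_cardMg // defQA.
split => //.
have [_ defRA _ _] := dprodP dRA.
have cplR : A \in [complements to R in P] by apply/complP.
have cplQ : A \in [complements to Q in P] by apply/complP.
have [nQP _] := dprod_normal2 dQA.
pose f x := divgr R A x * remgr Q A x.
have fM : {in P &, {morph f : x y / x * y}}.
  move=> x y Px Py; rewrite /f (divgrM cplR cAR) // (remgrM cplQ nQP) //.
  have Ar : remgr Q A x \in A by apply: mem_remgr; rewrite defQA.
  have Pd : divgr R A y \in P by apply: (subsetP sRP); apply: mem_divgr; rewrite defRA.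
  exact: swap4 (centsP cAP _ Ar _ Pd).
pose fm := Morphism fM.
have fP x : x \in P -> f x \in P.
  move=> Px; rewrite groupM //.
    by apply: (subsetP sRP); apply: mem_divgr; rewrite defRA.
  by apply: (subsetP sAP); apply: mem_remgr; rewrite defQA.
have injf : 'injm fm.
  apply/subsetP => x Kx; have Px := dom_ker Kx.
  move/(kerP fm Px): Kx => /= fx1.
  have Ar : remgr Q A x \in A by apply: mem_remgr; rewrite defQA.
  have Rd : divgr R A x \in R by apply: mem_divgr; rewrite defRA.
  have d1 : divgr R A x = 1.
    have : divgr R A x \in R :&: A.
      by rewrite inE Rd /= -(mulgK (remgr Q A x) (divgr R A x)) -/(f x) fx1 mul1g groupV.
    by rewrite tiRA => /set1P.
  have r1 : remgr Q A x = 1 by move: fx1; rewrite /f d1 mul1g.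
  suff : x \in Q :&: A by rewrite tiQA.
  rewrite inE; apply/andP; split.
    by rewrite (divgr_eq Q A x) r1 mulg1 mem_divgr // defQA.
  by rewrite (divgr_eq R A x) d1 mul1g mem_remgr // defRA.
have imf : fm @* P = P.
  apply/eqP; rewrite eqEcard card_injm // leqnn andbT.
  by apply/subsetP => _ /morphimP[x _ Px ->]; exact: fP.
exists (aut injf imf); first exact: Aut_aut.
split.
- move=> x Px; rewrite autE //=.
  have zA : (remgr R A x)^-1 * remgr Q A x \in A.
    by rewrite groupM ?groupV ?mem_remgr ?defQA ?defRA.
  have -> : f x = x * ((remgr R A x)^-1 * remgr Q A x) by rewrite /f /divgr mulgA.
  by rewrite -(centsP cAP _ zA _ Px) rcosetM rcoset_id // (subsetP sAZ).
- transitivity (fm @* Q).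
    rewrite morphimEsub //; apply: eq_in_imset => x Qx; by apply: autE; apply: (subsetP sQP).
  apply/eqP; rewrite eqEcard card_injm // cardQR leqnn andbT.
  apply/subsetP=> _ /morphimP[x _ Qx ->] /=.
  by rewrite /f remgr1 // mulg1 mem_divgr // defRA (subsetP sQP).
- move=> z Zz; have Pz : z \in P by apply: (subsetP (center_sub P)).
  rewrite autE //=.
  have rA : remgr Q A z \in A by apply: mem_remgr; rewrite defQA.
  have qZ : divgr Q A z \in P^`(1).
    rewrite -IQ inE mem_divgr ?defQA //=.
    by rewrite groupM ?groupV // (subsetP sAZ).
  rewrite /f {1 2}(divgr_eq Q A z) (divgrMid tiRA) ?(subsetP sP'R) //.
  by rewrite (remgrMid tiQA) ?(subsetP sP'Q) // -divgr_eq.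
Qed.

Theorem lemma2p3 (gT : finGroupType) (p : nat) (P : {group gT}) :
  prime p -> odd p -> p.-group P -> nil_class P = 2 -> exponent P = p ->
  (exists (Q A : {group gT}),
      [/\ Q \subset P, 'Z(Q) = Q^`(1), Q^`(1) = P^`(1),
          A \subset 'Z(P) & Q \x A = P])
  /\
  (forall (Q R A : {group gT}),
      Q \subset P -> R \subset P ->
      'Z(Q) = Q^`(1) -> Q^`(1) = P^`(1) -> P^`(1) = R^`(1) -> R^`(1) = 'Z(R) ->
      Q * 'Z(P) = P -> R * 'Z(P) = P ->
      A \subset 'Z(P) -> Q \x A = P ->
      R \x A = P /\
      exists2 phi : {perm gT}, phi \in Aut P &
        [/\ upper_central P phi, phi @: Q = R &
            forall z, z \in 'Z(P) -> phi z = z]).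
Proof.
move=> pr_p _ _ cl eP.
have sP'Z : P^`(1) \subset 'Z(P) by rewrite -nil_class2 cl.
split; first by apply: (part1 pr_p sP'Z); rewrite eP.
move=> Q R A; exact: part2.
Qed.
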